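(* Let $m$ be any nonzero complex number. Then for every nonnegative integer $n$, \begin{align*} &\sum_{k=0}^n\frac{((256-27m)k^3+384k^2+(176+21m)k-6m+24)\binom{4k}k}{(k+1)m^k} =-6m+\frac{8(2n+1)(4n+1)(4n+3)\binom{4n}n}{(n+1)m^n}, \\&\sum_{k=0}^n\frac{((256-27m)k^3+384k^2+(176+3m)k+24)\binom{4k}k}{(3k+1)m^k} =\frac{8(2n+1)(4n+1)(4n+3)\binom{4n}n}{(3n+1)m^n}, \\&\sum_{k=0}^n\frac{((256-27m)k^3+3(128-9m)k^2+2(88-3m)k+24)\binom{4k}k}{(3k+1)(3k+2)m^k} =\frac{8(2n+1)(4n+1)(4n+3)\binom{4n}n}{(3n+1)(3n+2)m^n}. \end{align*} Consequently, if $|m|>256/27$, then \begin{align*} &\sum_{k=0}^\infty\frac{((256-27m)k^3+384k^2+(176+21m)k-6m+24)\binom{4k}k}{(k+1)m^k}=-6m, \\&\sum_{k=0}^\infty\frac{((256-27m)k^3+384k^2+(176+3m)k+24)\binom{4k}k}{(3k+1)m^k}=0, \\&\sum_{k=0}^\infty\frac{((256-27m)k^3+3(128-9m)k^2+2(88-3m)k+24)\binom{4k}k}{(3k+1)(3k+2)m^k}=0. \end{align*} *)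

(* Defs.v *)
From HB Require Import structures.
From mathcomp Require Import all_boot all_order all_algebra.
From mathcomp Require Import complex.
From mathcomp Require Import all_classical all_reals all_analysis.
Set Implicit Arguments. Unset Strict Implicit. Unset Printing Implicit Defensive.
Import Order.TTheory GRing.Theory Num.Theory.
Import numFieldTopology.Exports numFieldNormedType.Exports.
Local Open Scope ring_scope.

(* The complex numbers C = R[i], viewed as a numClosedFieldType so that the
   generic topology/normed structure of MathComp-Analysis applies. *)
Definition C (R : realType) : numClosedFieldType := R[i].

Definition term1 (R : realType) (m : C R) (k : nat) : C R :=
  ((256 - 27 * m) * k%:R ^+ 3 + 384 * k%:R ^+ 2 + (176 + 21 * m) * k%:R - 6 * m + 24)
  * ('C(4 * k, k))%:R / ((k.+1)%:R * m ^+ k).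

Definition term2 (R : realType) (m : C R) (k : nat) : C R :=
  ((256 - 27 * m) * k%:R ^+ 3 + 384 * k%:R ^+ 2 + (176 + 3 * m) * k%:R + 24)
  * ('C(4 * k, k))%:R / ((3 * k + 1)%:R * m ^+ k).

Definition term3 (R : realType) (m : C R) (k : nat) : C R :=
  ((256 - 27 * m) * k%:R ^+ 3 + 3 * (128 - 9 * m) * k%:R ^+ 2
     + 2 * (88 - 3 * m) * k%:R + 24)
  * ('C(4 * k, k))%:R / ((3 * k + 1)%:R * (3 * k + 2)%:R * m ^+ k).

Definition rhsnum (R : realType) (n : nat) : C R :=
  8 * (2 * n + 1)%:R * (4 * n + 1)%:R * (4 * n + 3)%:R * ('C(4 * n, n))%:R.

(* Main.v *)
Require Import Defs.
From HB Require Import structures.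
From mathcomp Require Import all_boot all_order all_algebra.
From mathcomp Require Import complex.
From mathcomp Require Import all_classical all_reals all_analysis.
From mathcomp Require Import ring lra zify.
Import Order.TTheory GRing.Theory Num.Theory.
Import numFieldTopology.Exports numFieldNormedType.Exports.
Local Open Scope classical_set_scope.
Local Open Scope ring_scope.
Lemma binS n : ('C(4 * n.+1, n.+1) * (n.+1 * (3*n+3) * (3*n+2) * (3*n+1))
  = 'C(4 * n, n) * ((4*n+4)*(4*n+3)*(4*n+2)*(4*n+1)))%N.
Proof.
have h1 := mul_bin_diag (4*n+4) n.
have h2 := mul_bin_down (4*n+3) n.
have h3 := mul_bin_down (4*n+2) n.
have h4 := mul_bin_down (4*n+1) n.
have -> : (4 * n.+1 = 4*n+4)%N by lia.
have e1 : ((4*n+4).-1 = 4*n+3)%N by lia.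
have e2 : ((4*n+3).-1 = 4*n+2)%N by lia.
have e3 : ((4*n+2).-1 = 4*n+1)%N by lia.
have e4 : ((4*n+1).-1 = 4*n)%N by lia.
rewrite e1 in h1; rewrite e2 in h2; rewrite e3 in h3; rewrite e4 in h4.
have f2 : (4*n+3-n = 3*n+3)%N by lia.
have f3 : (4*n+2-n = 3*n+2)%N by lia.
have f4 : (4*n+1-n = 3*n+1)%N by lia.
rewrite f2 in h2; rewrite f3 in h3; rewrite f4 in h4.
have -> : ('C(4 * n + 4, n.+1) * (n.+1 * (3 * n + 3) * (3 * n + 2) * (3 * n + 1))
   = (n.+1 * 'C(4 * n + 4, n.+1)) * (3 * n + 3) * (3 * n + 2) * (3 * n + 1))%N.
  by rewrite !mulnA (mulnC _ n.+1).
rewrite -h1.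
have -> : ((4 * n + 4) * 'C(4 * n + 3, n) * (3 * n + 3) * (3 * n + 2) * (3 * n + 1)
  = (4 * n + 4) * ((3 * n + 3) * 'C(4 * n + 3, n)) * (3 * n + 2) * (3 * n + 1))%N.
  by rewrite -!mulnA; congr (_ * _); rewrite !mulnA (mulnC _ (3*n+3)).
rewrite -h2.
have -> : ((4 * n + 4) * ((4 * n + 3) * 'C(4 * n + 2, n)) * (3 * n + 2) * (3 * n + 1)
  = (4 * n + 4) * (4 * n + 3) * ((3 * n + 2) * 'C(4 * n + 2, n)) * (3 * n + 1))%N.
  by rewrite -!mulnA; congr (_ * (_ * _)); rewrite !mulnA (mulnC _ (3*n+2)).
rewrite -h3.
have -> : ((4 * n + 4) * (4 * n + 3) * ((4 * n + 2) * 'C(4 * n + 1, n)) * (3 * n + 1)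
  = (4 * n + 4) * (4 * n + 3) * (4 * n + 2) * ((3 * n + 1) * 'C(4 * n + 1, n)))%N.
  by rewrite -!mulnA; congr (_ * (_ * (_ * _))); rewrite mulnC.
rewrite -h4; lia.
Qed.
Section Alg.
Variable R : realType.
Implicit Types m : C R.

Lemma natC_neq0 (k : nat) : (0 < k)%N -> (k%:R : C R) != 0.
Proof. by move=> h; rewrite pnatr_eq0 -lt0n. Qed.

Lemma binSC_gen (a b n : nat) : (a * (n.+1 * (3*n+3) * (3*n+2) * (3*n+1))
  = b * ((4*n+4)*(4*n+3)*(4*n+2)*(4*n+1)))%N -> a%:R = b%:R *
   ((4*n%:R+4)*(4*n%:R+3)*(4*n%:R+2)*(4*n%:R+1)) /
   ((n%:R + 1) * (3*n%:R+3) * (3*n%:R+2) * (3*n%:R+1)) :> C R.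
Proof.
move=> h; have {h} := congr1 (fun k => k%:R : C R) h; cbv beta.
rewrite !(natrM, natrD) -addn1 natrD => h.
have hQ : ((n%:R + 1) * (3*n%:R+3) * (3*n%:R+2) * (3*n%:R+1) : C R) != 0.
  have hp : (0 < n.+1 * (3*n+3) * (3*n+2) * (3*n+1))%N by rewrite !muln_gt0; lia.
  have := natC_neq0 _ hp.
  by rewrite !(natrM, natrD) -addn1 natrD.
by apply: (mulIf hQ); rewrite mulfVK // h.
Qed.

Lemma binSC n : ('C(4 * n.+1, n.+1))%:R = ('C(4 * n, n))%:R *
   ((4*n%:R+4)*(4*n%:R+3)*(4*n%:R+2)*(4*n%:R+1)) /
   ((n%:R + 1) * (3*n%:R+3) * (3*n%:R+2) * (3*n%:R+1)) :> C R.
Proof. exact: binSC_gen (binS n). Qed.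
End Alg.
Section Step.
Variable R : realType.
Lemma step2 (m : C R) n : m != 0 ->
  rhsnum R n / ((3 * n + 1)%:R * m ^+ n) + term2 m n.+1
  = rhsnum R n.+1 / ((3 * n.+1 + 1)%:R * m ^+ n.+1).
Proof.
move=> hm.
rewrite /term2 /rhsnum binSC (exprS m n).
move: ('C(4 * n, n)%:R : C R) => c.
set x : C R := n%:R.
have e1 : (3 * n.+1 + 1)%:R = 3 * x + 4 :> C R by rewrite natrD natrM -natr1; ring.
have e2 : (2 * n.+1 + 1)%:R = 2 * x + 3 :> C R by rewrite natrD natrM -natr1; ring.
have e3 : (4 * n.+1 + 1)%:R = 4 * x + 5 :> C R by rewrite natrD natrM -natr1; ring.
have e4 : (4 * n.+1 + 3)%:R = 4 * x + 7 :> C R by rewrite natrD natrM -natr1; ring.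
have e5 : (n.+1)%:R = x + 1 :> C R by rewrite -natr1.
have e6 : (3 * n + 1)%:R = 3 * x + 1 :> C R by rewrite natrD natrM.
have e7 : (2 * n + 1)%:R = 2 * x + 1 :> C R by rewrite natrD natrM.
have e8 : (4 * n + 1)%:R = 4 * x + 1 :> C R by rewrite natrD natrM.
have e9 : (4 * n + 3)%:R = 4 * x + 3 :> C R by rewrite natrD natrM.
rewrite e1 e2 e3 e4 e5 e6 e7 e8 e9.
field.
rewrite expf_neq0 // hm /=.
by rewrite -[1]/(1%:R) -!natrM -!natrD !pnatr_eq0; lia.
Qed.

Lemma step1 (m : C R) n : m != 0 ->
  (- (6 * m) + rhsnum R n / ((n.+1)%:R * m ^+ n)) + term1 m n.+1
  = - (6 * m) + rhsnum R n.+1 / ((n.+2)%:R * m ^+ n.+1).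
Proof.
move=> hm.
rewrite /term1 /rhsnum binSC (exprS m n).
move: ('C(4 * n, n)%:R : C R) => c.
set x : C R := n%:R.
have e0 : (n.+2)%:R = x + 2 :> C R by rewrite -natr1 -natr1; ring.
have e2 : (2 * n.+1 + 1)%:R = 2 * x + 3 :> C R by rewrite natrD natrM -natr1; ring.
have e3 : (4 * n.+1 + 1)%:R = 4 * x + 5 :> C R by rewrite natrD natrM -natr1; ring.
have e4 : (4 * n.+1 + 3)%:R = 4 * x + 7 :> C R by rewrite natrD natrM -natr1; ring.
have e5 : (n.+1)%:R = x + 1 :> C R by rewrite -natr1.
have e7 : (2 * n + 1)%:R = 2 * x + 1 :> C R by rewrite natrD natrM.
have e8 : (4 * n + 1)%:R = 4 * x + 1 :> C R by rewrite natrD natrM.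
have e9 : (4 * n + 3)%:R = 4 * x + 3 :> C R by rewrite natrD natrM.
rewrite e0 e2 e3 e4 e5 e7 e8 e9.
field.
rewrite expf_neq0 // hm /=.
by rewrite -[1]/(1%:R) -[2]/(2%:R) -!natrM -!natrD !pnatr_eq0; lia.
Qed.

Lemma step3 (m : C R) n : m != 0 ->
  rhsnum R n / ((3 * n + 1)%:R * (3 * n + 2)%:R * m ^+ n) + term3 m n.+1
  = rhsnum R n.+1 / ((3 * n.+1 + 1)%:R * (3 * n.+1 + 2)%:R * m ^+ n.+1).
Proof.
move=> hm.
rewrite /term3 /rhsnum binSC (exprS m n).
move: ('C(4 * n, n)%:R : C R) => c.
set x : C R := n%:R.
have e1 : (3 * n.+1 + 1)%:R = 3 * x + 4 :> C R by rewrite natrD natrM -natr1; ring.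
have e0 : (3 * n.+1 + 2)%:R = 3 * x + 5 :> C R by rewrite natrD natrM -natr1; ring.
have e2 : (2 * n.+1 + 1)%:R = 2 * x + 3 :> C R by rewrite natrD natrM -natr1; ring.
have e3 : (4 * n.+1 + 1)%:R = 4 * x + 5 :> C R by rewrite natrD natrM -natr1; ring.
have e4 : (4 * n.+1 + 3)%:R = 4 * x + 7 :> C R by rewrite natrD natrM -natr1; ring.
have e5 : (n.+1)%:R = x + 1 :> C R by rewrite -natr1.
have e6 : (3 * n + 1)%:R = 3 * x + 1 :> C R by rewrite natrD natrM.
have e6' : (3 * n + 2)%:R = 3 * x + 2 :> C R by rewrite natrD natrM.
have e7 : (2 * n + 1)%:R = 2 * x + 1 :> C R by rewrite natrD natrM.
have e8 : (4 * n + 1)%:R = 4 * x + 1 :> C R by rewrite natrD natrM.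
have e9 : (4 * n + 3)%:R = 4 * x + 3 :> C R by rewrite natrD natrM.
rewrite e1 e0 e2 e3 e4 e5 e6 e6' e7 e8 e9.
field.
rewrite expf_neq0 // hm /=.
by rewrite -[1]/(1%:R) -!natrM -!natrD !pnatr_eq0; lia.
Qed.

Lemma base1 (m : C R) : \sum_(k < 1) term1 m k = - (6 * m) + rhsnum R 0 / ((0.+1)%:R * m ^+ 0).
Proof.
rewrite big_ord1 /term1 /rhsnum muln0 bin0 !expr0.
change (nat_of_ord (@ord0 0)) with 0%N.
rewrite !muln0 !add0n mulr1 invr1 !mulr1; ring.
Qed.

Lemma base2 (m : C R) : \sum_(k < 1) term2 m k = rhsnum R 0 / ((3 * 0 + 1)%:R * m ^+ 0).
Proof.
rewrite big_ord1 /term2 /rhsnum muln0 bin0 !expr0.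
change (nat_of_ord (@ord0 0)) with 0%N.
by rewrite !muln0 !add0n; field.
Qed.

Lemma base3 (m : C R) : \sum_(k < 1) term3 m k = rhsnum R 0 / ((3 * 0 + 1)%:R * (3 * 0 + 2)%:R * m ^+ 0).
Proof.
rewrite big_ord1 /term3 /rhsnum muln0 bin0 !expr0.
change (nat_of_ord (@ord0 0)) with 0%N.
by rewrite !muln0 !add0n; field.
Qed.
End Step.
Lemma bin_bound n : ('C(4*n,n) * 27^n <= 256^n)%N.
Proof.
have h3 : (3*n < (4*n).+1)%N by lia.
have -> : (256^n = (1+3)^(4*n))%N by rewrite expnM.
rewrite expnDn (bigD1 (Ordinal h3)) //= exp1n mul1n.
have hn : (n <= 4*n)%N by lia.
have eC := bin_sub hn. have e' : (4*n - n = 3*n)%N by lia. rewrite e' in eC.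
rewrite eC expnM. exact: leq_addr.
Qed.

Section Real.
Variable R : realType.
Lemma eqK (b t r : R) n : b ^+ 3 / t ^+ 3 * (b ^+ 3 * r) ^+ n = (b ^+ n.+1) ^+ 3 / t ^+ 3 * r ^+ n.
Proof.
rewrite exprMn -!exprM.
have -> : b ^+ (n.+1 * 3) = b ^+ 3 * b ^+ (3 * n).
  by rewrite -exprD; congr (_ ^+ _); lia.
by rewrite mulrA [b ^+ 3 * _ / _]mulrAC.
Qed.

Lemma real_bound (r : R) : 0 < r -> r < 1 -> exists K q : R,
  [/\ 0 <= K, 0 < q, q < 1 & forall n : nat, (n.+1%:R)^+3 * r^+n <= K * q^+n].
Proof.
move=> r0 r1.
pose t := (1 - r) / 8; pose b := 1 + t.
have ht0 : 0 < t by rewrite /t; lra.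
have ht1 : t <= 1 by rewrite /t; lra.
have bern : forall k : nat, 1 + k%:R * t <= b ^+ k.
  elim=> [|k IH]; first by rewrite expr0 mul0r addr0.
  have hk : 0 <= k%:R :> R by [].
  rewrite exprS -natr1 /b. nra.
have hx : forall n : nat, t * n.+1%:R <= b ^+ n.+1.
  by move=> n; have := bern n.+1; lra.
exists (b ^+ 3 / t ^+ 3), (b ^+ 3 * r); split.
- by rewrite divr_ge0 // exprn_ge0 // /b; lra.
- by rewrite mulr_gt0 // exprn_gt0 // /b; lra.
- have h1 : t * t <= t by nra.
  have h2 : t * t * t <= t by nra.
  have : b ^+ 3 <= 1 + 7 * t by rewrite /b; nra.
  rewrite /t in ht0 ht1 h1 h2 * => hb; nra.
move=> n.
have hr : 0 <= r ^+ n by rewrite exprn_ge0 // ltW.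
have e : b ^+ 3 / t ^+ 3 * (b ^+ 3 * r) ^+ n = (b ^+ n.+1) ^+ 3 / t ^+ 3 * r ^+ n.
  exact: eqK.
rewrite e; apply: ler_wpM2r => //.
rewrite ler_pdivlMr ?exprn_gt0 // -exprMn.
apply: lerXn2r; rewrite ?nnegrE.
- by rewrite mulr_ge0 // ltW.
- by rewrite exprn_ge0 // /b; lra.
- by rewrite mulrC.
Qed.
Definition NN (n : nat) : nat := (8 * (2 * n + 1) * (4 * n + 1) * (4 * n + 3) * 'C(4 * n, n))%N.

Lemma real_ineq (rho : R) n (D : nat) : 0 < rho -> (0 < D)%N ->
  (NN n)%:R / (D%:R * rho ^+ n) <= 256 * (n.+1%:R ^+ 3 * (256 / (27 * rho)) ^+ n).
Proof.
move=> hr hD.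
have hc : ('C(4 * n, n))%:R * 27 ^+ n <= 256 ^+ n :> R.
  by rewrite -!natrX -natrM ler_nat bin_bound.
have hrn : 0 < rho ^+ n by rewrite exprn_gt0.
have hD1 : 1 <= D%:R :> R by rewrite ler1n.
have c0 : 0 <= ('C(4 * n, n))%:R :> R by [].
set c : R := ('C(4 * n, n))%:R in hc c0 *.
have x0 : 0 <= n%:R :> R by [].
have eN : (NN n)%:R = 8 * (2 * n%:R + 1) * (4 * n%:R + 1) * (4 * n%:R + 3) * c :> R.
  by rewrite /NN !(natrM, natrD).
have e1 : n.+1%:R = n%:R + 1 :> R by rewrite -natr1.
rewrite eN e1.
set x : R := n%:R in x0 *.
have s1 : 8 * (2 * x + 1) * (4 * x + 1) * (4 * x + 3) * c <= 256 * (x + 1) ^+ 3 * c.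
  apply: ler_wpM2r => //. nra.
have s2 : c / rho ^+ n <= (256 / (27 * rho)) ^+ n.
  have h27 : 0 < (27 : R) ^+ n by rewrite exprn_gt0.
  rewrite expr_div_n exprMn ler_pdivlMr ?mulr_gt0 //.
  have -> : c / rho ^+ n * (27 ^+ n * rho ^+ n) = c * 27 ^+ n.
    by field; rewrite gt_eqF.
  exact: hc.
apply: (le_trans (y := 8 * (2 * x + 1) * (4 * x + 1) * (4 * x + 3) * c / rho ^+ n)).
  rewrite ler_pdivrMr ?mulr_gt0 // ?(lt_le_trans ltr01 hD1) //.
  set P := 8 * (2 * x + 1) * (4 * x + 1) * (4 * x + 3) * c.
  have P0 : 0 <= P by rewrite /P; apply: mulr_ge0 => //; nra.
  have -> : P / rho ^+ n * (D%:R * rho ^+ n) = P * D%:R by field; rewrite gt_eqF.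
  nra.
apply: (le_trans (y := 256 * (x + 1) ^+ 3 * c / rho ^+ n)).
  by apply: ler_wpM2r => //; rewrite invr_ge0 ltW.
rewrite -mulrA -mulrA; apply: ler_wpM2l => //.
apply: ler_wpM2l; first by rewrite exprn_ge0 //; lra.
exact: s2.
Qed.
Local Open Scope complex_scope.
Lemma key (m : C R) (d : nat -> C R) (D : nat -> nat) :
  (forall n, d n = (D n)%:R) -> (forall n, (0 < D n)%N) -> 256%:R / 27%:R < `|m| ->
  (fun n => rhsnum R n / (d n * m ^+ n)) @ \oo --> (0 : C R).
Proof.
move=> hd hD hm.
pose rho : R := Num.sqrt (complex.Re m ^+ 2 + complex.Im m ^+ 2).
have nm : `|m| = rho%:C := normc_def m.
have hrho : 256%:R / 27%:R < rho.
  move: hm; rewrite nm.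
  have -> : (256%:R / 27%:R : C R) = (256%:R / 27%:R : R)%:C.
    by rewrite rmorphM fmorphV !rmorph_nat.
  by rewrite ltcR.
have rho0 : 0 < rho by apply: lt_trans hrho; rewrite divr_gt0.
have r0 : 0 < 256 / (27 * rho) by rewrite divr_gt0 // mulr_gt0.
have r1 : 256 / (27 * rho) < 1.
  rewrite ltr_pdivrMr ?mulr_gt0 // mul1r.
  by move: hrho; rewrite ltr_pdivrMr // mulrC.
have [K [q [K0 q0 q1 hKq]]] := real_bound _ r0 r1.
have geo : geometric K q @ \oo --> (0:R).
  by apply: cvg_geometric; rewrite ger0_norm // ltW.
apply/cvgr0Pnorm_lt => e; rewrite ltcE /= => /andP[/eqP hIm hRe].
have he : 0 < complex.Re e / 256 by rewrite divr_gt0.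
move/cvgr0Pnorm_lt: geo => /(_ _ he).
apply: filterS => n hn.
have eR : rhsnum R n = (NN n)%:R by rewrite /rhsnum /NN !natrM.
rewrite eR hd normrM normfV normrM normrX nm !normr_nat.
have -> : (NN n)%:R * ((D n)%:R * rho%:C ^+ n)^-1
   = ((NN n)%:R / ((D n)%:R * rho ^+ n) : R)%:C.
  by rewrite fmorph_div !(rmorph_nat (real_complex R)) (rmorphM (real_complex R)) (rmorphXn (real_complex R)) (rmorph_nat (real_complex R)).
rewrite ltcE /= hIm eqxx /=.
apply: (le_lt_trans (real_ineq rho n (D n) rho0 (hD n))).
have := hKq n.
move: hn; rewrite /geometric /=.
have := real_ler_norm (num_real (K * q ^+ n)).
lra.
Qed.
End Real.

Theorem lemma3p6 (R : realType) (m : C R) (hm : m != 0) :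
  (forall n : nat,
     [/\ \sum_(k < n.+1) term1 m k = - (6 * m) + rhsnum R n / ((n.+1)%:R * m ^+ n),
         \sum_(k < n.+1) term2 m k = rhsnum R n / ((3 * n + 1)%:R * m ^+ n)
       & \sum_(k < n.+1) term3 m k
           = rhsnum R n / ((3 * n + 1)%:R * (3 * n + 2)%:R * m ^+ n)]) /\
  (256%:R / 27%:R < `|m| ->
     [/\ series (term1 m) @ \oo --> - (6 * m),
         series (term2 m) @ \oo --> (0 : C R)
       & series (term3 m) @ \oo --> (0 : C R)]).
Proof.
have P1 : forall n : nat,
     [/\ \sum_(k < n.+1) term1 m k = - (6 * m) + rhsnum R n / ((n.+1)%:R * m ^+ n),
         \sum_(k < n.+1) term2 m k = rhsnum R n / ((3 * n + 1)%:R * m ^+ n)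
       & \sum_(k < n.+1) term3 m k
           = rhsnum R n / ((3 * n + 1)%:R * (3 * n + 2)%:R * m ^+ n)].
  elim=> [|n [IH1 IH2 IH3]].
    by split; [exact: base1 | exact: base2 | exact: base3].
  split.
  - by rewrite big_ord_recr /= IH1 step1.
  - by rewrite big_ord_recr /= IH2 step2.
  - by rewrite big_ord_recr /= IH3 step3.
split => // hm'.
split.
- rewrite -cvg_shiftS.
  have H := cvgD (cvg_cst (- (6 * m)))
     (@key R m (fun n => (n.+1)%:R) (fun n => n.+1) (fun n => erefl) (fun n => isT) hm').
  rewrite addr0 in H.
  have -> : [sequence series (term1 m) n.+1]_n
      = (fun n => - (6 * m) + rhsnum R n / ((n.+1)%:R * m ^+ n)).
    by apply/funext => n; rewrite seriesEord /=; case: (P1 n).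
  exact: H.
- rewrite -cvg_shiftS.
  have -> : [sequence series (term2 m) n.+1]_n
      = (fun n => rhsnum R n / ((3 * n + 1)%:R * m ^+ n)).
    by apply/funext => n; rewrite seriesEord /=; case: (P1 n).
  by apply: (@key R m _ (fun n => 3 * n + 1)%N) => // n; rewrite addn1.
- rewrite -cvg_shiftS.
  have -> : [sequence series (term3 m) n.+1]_n
      = (fun n => rhsnum R n / ((3 * n + 1)%:R * (3 * n + 2)%:R * m ^+ n)).
    by apply/funext => n; rewrite seriesEord /=; case: (P1 n).
  apply: (@key R m _ (fun n => (3 * n + 1) * (3 * n + 2))%N) => // n.
  - by rewrite natrM.
  - by rewrite muln_gt0 !addn_gt0 orbT.
Qed.
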